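(* Let $q\in\mathbb{C}$ with $0<|q|<1$ and $n\in\mathbb{N}$. Then \[ \frac{1}{(q)_\infty}\sum_{k=0}^\infty\frac{q^{k^2}}{(q)_k (q)_{n-k}} =\frac{1}{(q)_n} \sum_{k=0}^{\infty}\frac{q^{k^2}}{(q)_k (q)_{n+k}}, \qquad \frac{1}{(q)_\infty}\sum_{k=0}^\infty\frac{q^{k^2+k}}{(q)_k (q)_{n-k}} =\frac{1}{(q)_n}\sum_{k=0}^{\infty}\frac{q^{k^2+k}}{(q)_k (q)_{n+k+1}}. \]
   Context: $(q)_n=(1-q)(1-q^2)\cdots(1-q^n)$ for $n\ge0$ (with $(q)_0=1$), $1/(q)_n=0$ for $n<0$, and $(q)_\infty=\prod_{i\ge1}(1-q^i)$. *)

(* Defs.v *)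
From Stdlib Require Import Reals.
From Coquelicot Require Import Coquelicot.
Open Scope C_scope.

Fixpoint qpoch (q : C) (n : nat) : C :=
  match n with
  | O => 1
  | S m => qpoch q m * (1 - q ^ (S m))
  end.

(* 1/(q)_m for an integer index m, with the convention 1/(q)_m = 0 for m < 0. *)
Definition qpoch_inv (q : C) (m : Z) : C :=
  if (m <? 0)%Z then 0 else / qpoch q (Z.to_nat m).

Definition qpoch_inf_is (q : C) (P : C) : Prop :=
  filterlim (fun N => qpoch q N) eventually (locally P).

(* Main.v *)
Require Import Defs.
From Stdlib Require Import Reals ZArith Lia Lra Psatz ClassicalEpsilon.
From Coquelicot Require Import Coquelicot.
Open Scope C_scope.

Lemma exp_mono (x y : R) : (x <= y)%R -> (exp x <= exp y)%R.
Proof. intros H. destruct (Rle_lt_or_eq_dec _ _ H) as [H1|H1].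
  left; now apply exp_increasing. subst; lra. Qed.

Lemma pow_le1 (r : R) n : (0 <= r <= 1)%R -> (r ^ n <= 1)%R.
Proof. intros H. rewrite <- (pow1 n). apply pow_incr. lra. Qed.

Lemma Cmod_1_minus_ge (z : C) : (1 - Cmod z <= Cmod (1 - z))%R.
Proof.
  assert (H := Cmod_triangle (1 - z) z).
  replace (1 - z + z) with (RtoC 1) in H by ring. rewrite Cmod_1 in H. lra.
Qed.

Lemma Cmod_1_minus_le (z : C) : (Cmod (1 - z) <= 1 + Cmod z)%R.
Proof.
  assert (H := Cmod_triangle 1 (- z)). rewrite Cmod_opp, Cmod_1 in H.
  exact H.
Qed.

Lemma qpoch_S q m : qpoch q (S m) = qpoch q m * (1 - q ^ (S m)).
Proof. reflexivity. Qed.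

Lemma qpoch_lb_aux (q : C) (hr0 : (0 < Cmod q)%R) (hr1 : (Cmod q < 1)%R) m :
  (exp (- ((Cmod q - Cmod q ^ (S m)) / (1 - Cmod q)^2)) <= Cmod (qpoch q m))%R.
Proof.
  set (r := Cmod q) in *.
  induction m.
  - simpl. rewrite Cmod_1. replace (r - r * 1)%R with 0%R by ring.
    unfold Rdiv; rewrite Rmult_0_l, Ropp_0, exp_0; lra.
  - rewrite qpoch_S, Cmod_mult.
    set (s := (r ^ S m)%R).
    assert (hs0 : (0 < s)%R) by (apply pow_lt; lra).
    assert (hs1 : (s <= r)%R) by (unfold s; simpl; assert (r ^ m <= 1)%R by (apply pow_le1; lra); nra).
    assert (hrs : (r ^ S (S m) = r * s)%R) by reflexivity.
    rewrite hrs.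
    replace (- ((r - r * s) / (1 - r) ^ 2))%R with
      ((- ((r - s) / (1 - r) ^ 2)) + (- (s / (1 - r))))%R by (field; lra).
    rewrite exp_plus.
    apply Rmult_le_compat; try (left; apply exp_pos). exact IHm.
    assert (H1 := Cmod_1_minus_ge (q ^ S m)). rewrite Cmod_pow in H1. fold r s in H1.
    apply Rle_trans with (1 - s)%R; [|exact H1].
    apply Rle_trans with (exp (- (s / (1 - s)))).
    apply exp_mono. apply Ropp_le_contravar. apply Rmult_le_compat_l. lra.
    apply Rinv_le_contravar; lra.
    assert (H2 := exp_ineq1_le (s / (1 - s))).
    rewrite exp_Ropp.
    replace (1 - s)%R with (/ (/ (1 - s)))%R at 2 by (field; lra).
    apply Rinv_le_contravar. apply Rinv_0_lt_compat; lra.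
    replace (/ (1 - s))%R with (1 + s / (1 - s))%R by (field; lra). exact H2.
Qed.

Lemma qpoch_ub_aux (q : C) (hr0 : (0 < Cmod q)%R) (hr1 : (Cmod q < 1)%R) m :
  (Cmod (qpoch q m) <= exp ((Cmod q - Cmod q ^ (S m)) / (1 - Cmod q)))%R.
Proof.
  set (r := Cmod q) in *.
  induction m.
  - simpl. rewrite Cmod_1. replace (r - r * 1)%R with 0%R by ring.
    unfold Rdiv; rewrite Rmult_0_l, exp_0; lra.
  - rewrite qpoch_S, Cmod_mult.
    set (s := (r ^ S m)%R).
    assert (hs0 : (0 < s)%R) by (apply pow_lt; lra).
    assert (hrs : (r ^ S (S m) = r * s)%R) by reflexivity.
    rewrite hrs.
    replace (((r - r * s) / (1 - r)))%R with
      (((r - s) / (1 - r)) + s)%R by (field; lra).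
    rewrite exp_plus.
    apply Rmult_le_compat; try apply Cmod_ge_0. exact IHm.
    assert (H1 := Cmod_1_minus_le (q ^ S m)). rewrite Cmod_pow in H1. fold r s in H1.
    apply Rle_trans with (1 + s)%R; [exact H1|]. apply exp_ineq1_le.
Qed.

Definition Ub (q : C) : R := exp (/ (1 - Cmod q)).
Definition Vb (q : C) : R := exp (/ (1 - Cmod q) ^ 2).

Lemma qpoch_ub (q : C) (hr0 : (0 < Cmod q)%R) (hr1 : (Cmod q < 1)%R) m :
  (Cmod (qpoch q m) <= Ub q)%R.
Proof.
  eapply Rle_trans. apply qpoch_ub_aux; auto. unfold Ub. apply exp_mono.
  assert (0 < Cmod q ^ S m)%R by (apply pow_lt; lra).
  unfold Rdiv. rewrite <- (Rmult_1_l (/ (1 - Cmod q))) at 2.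
  apply Rmult_le_compat_r. left; apply Rinv_0_lt_compat; lra. lra.
Qed.

Lemma qpoch_lb (q : C) (hr0 : (0 < Cmod q)%R) (hr1 : (Cmod q < 1)%R) m :
  (/ Vb q <= Cmod (qpoch q m))%R.
Proof.
  eapply Rle_trans; [|apply qpoch_lb_aux; auto]. unfold Vb. rewrite <- exp_Ropp.
  apply exp_mono. apply Ropp_le_contravar.
  assert (0 < Cmod q ^ S m)%R by (apply pow_lt; lra).
  assert (0 < (1 - Cmod q) ^ 2)%R by (apply pow_lt; lra).
  unfold Rdiv. rewrite <- (Rmult_1_l (/ (1 - Cmod q) ^ 2)) at 2.
  apply Rmult_le_compat_r. left; apply Rinv_0_lt_compat; lra. lra.
Qed.

Lemma Vb_pos q : (0 < Vb q)%R. Proof. apply exp_pos. Qed.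
Lemma Ub_pos q : (0 < Ub q)%R. Proof. apply exp_pos. Qed.

Lemma qpoch_nz (q : C) (hr0 : (0 < Cmod q)%R) (hr1 : (Cmod q < 1)%R) m :
  qpoch q m <> 0.
Proof.
  intros H. assert (H1 := qpoch_lb q hr0 hr1 m). rewrite H, Cmod_0 in H1.
  assert (0 < / Vb q)%R by (apply Rinv_0_lt_compat, Vb_pos). lra.
Qed.

Lemma qpoch_inv_bound (q : C) (hr0 : (0 < Cmod q)%R) (hr1 : (Cmod q < 1)%R) m :
  (Cmod (/ qpoch q m) <= Vb q)%R.
Proof.
  rewrite Cmod_inv by (apply qpoch_nz; auto).
  assert (H1 := qpoch_lb q hr0 hr1 m). assert (H2 := Vb_pos q).
  rewrite <- (Rinv_inv (Vb q)). apply Rinv_le_contravar; auto.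
  apply Rinv_0_lt_compat; auto.
Qed.

Lemma qpoch_inv_nat q m : qpoch_inv q (Z.of_nat m) = / qpoch q m.
Proof.
  unfold qpoch_inv. destruct (Z.ltb_spec (Z.of_nat m) 0). lia. now rewrite Nat2Z.id.
Qed.

Lemma qpoch_inv_neg q z : (z < 0)%Z -> qpoch_inv q z = 0.
Proof. intros H. unfold qpoch_inv. destruct (Z.ltb_spec z 0). auto. lia. Qed.

Lemma qpoch_inv_bound_Z (q : C) (hr0 : (0 < Cmod q)%R) (hr1 : (Cmod q < 1)%R) z :
  (Cmod (qpoch_inv q z) <= Vb q)%R.
Proof.
  unfold qpoch_inv. destruct (z <? 0)%Z. rewrite Cmod_0. left; apply Vb_pos.
  apply qpoch_inv_bound; auto.
Qed.


Ltac Ceq := match goal with |- ?a = ?b => change (@eq C a b) end.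

Lemma lim_C (f : nat -> C) l : filterlim f eventually (locally l) <->
  (forall eps, 0 < eps -> exists N, forall n, (N <= n)%nat -> Cmod (f n - l) < eps)%R.
Proof.
  split.
  - intros H eps Heps.
    assert (Hf := @norm_factor_gt_0 C_AbsRing C_NormedModule).
    assert (He : (0 < eps / @norm_factor C_AbsRing C_NormedModule)%R)
      by (apply Rdiv_lt_0_compat; auto).
    apply filterlim_locally with (eps := mkposreal _ He) in H.
    destruct H as [N HN]. exists N. intros n Hn.
    specialize (HN n Hn). apply (@norm_compat2 C_AbsRing C_NormedModule) in HN. simpl in HN.
    change (Cmod (f n - l)) with (@norm C_AbsRing C_NormedModule (minus (f n) l)).
    replace eps with (@norm_factor C_AbsRing C_NormedModule * (eps / @norm_factor C_AbsRing C_NormedModule))%R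
      by (field; lra). exact HN.
  - intros H. apply filterlim_locally. intros eps.
    destruct (H eps (cond_pos eps)) as [N HN]. exists N. intros n Hn.
    apply (@norm_compat1 C_AbsRing C_NormedModule).
    change (@norm C_AbsRing C_NormedModule (minus (f n) l)) with (Cmod (f n - l)). apply HN; auto.
Qed.

Lemma is_series_C (a : nat -> C) l : is_series a l <->
  (forall eps, 0 < eps -> exists N, forall n, (N <= n)%nat -> Cmod (sum_n a n - l) < eps)%R.
Proof. apply lim_C. Qed.

Lemma is_series_C_uniq (a : nat -> C) l1 l2 : is_series a l1 -> is_series a l2 -> l1 = l2.
Proof. intros H1 H2. exact (filterlim_locally_unique _ _ _ H1 H2). Qed.

Lemma is_series_C_lin (a b : nat -> C) la lb x y :
  is_series a la -> is_series b lb ->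
  is_series (fun k => x * a k + y * b k) (x * la + y * lb).
Proof.
  intros Ha Hb. apply (is_series_scal x) in Ha. apply (is_series_scal y) in Hb.
  exact (is_series_plus _ _ _ _ Ha Hb).
Qed.

Lemma is_series_C_ext (a b : nat -> C) l :
  (forall k, a k = b k) -> is_series a l -> is_series b l.
Proof. apply is_series_ext. Qed.

Definition CS (a : nat -> C) : C := epsilon (inhabits (RtoC 0)) (fun l => is_series a l).

Lemma CS_correct (a : nat -> C) : ex_series a -> is_series a (CS a).
Proof. intros H. unfold CS. apply epsilon_spec. exact H. Qed.

Lemma ex_series_C_bound (a : nat -> C) (M r : R) :
  (0 <= r < 1)%R -> (forall k, Cmod (a k) <= M * r ^ k)%R -> ex_series a.
Proof.
  intros Hr H. apply (ex_series_le a (fun k => r ^ k * M)%R).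
  intros k. rewrite Rmult_comm. apply H.
  apply ex_series_scal_r. apply ex_series_geom. rewrite Rabs_right; lra.
Qed.

Lemma sum_n_C_S (a : nat -> C) n : sum_n a (S n) = sum_n a n + a (S n).
Proof. rewrite sum_Sn. reflexivity. Qed.

Lemma qpoch_conv (q : C) (hr0 : (0 < Cmod q)%R) (hr1 : (Cmod q < 1)%R) :
  exists P, qpoch_inf_is q P.
Proof.
  set (d := fun m => qpoch q (S m) - qpoch q m).
  assert (Hd : ex_series d).
  { apply (ex_series_C_bound d (Ub q) (Cmod q)). split; [lra|lra].
    intros k. unfold d. rewrite qpoch_S.
    replace (qpoch q k * (1 - q ^ S k) - qpoch q k) with (- (qpoch q k * q ^ S k)) by ring.
    rewrite Cmod_opp, Cmod_mult, Cmod_pow.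
    apply Rmult_le_compat. apply Cmod_ge_0. apply pow_le; lra.
    apply qpoch_ub; auto. simpl.
    assert (Cmod q ^ k >= 0)%R by (apply Rle_ge, pow_le; lra). nra. }
  destruct Hd as [l Hl].
  assert (Hs : forall N, sum_n d N = qpoch q (S N) - 1).
  { induction N. rewrite sum_O. unfold d. Ceq. simpl. ring.
    rewrite sum_n_C_S, IHN. unfold d. Ceq. ring. }
  exists (l + 1). unfold qpoch_inf_is. apply lim_C. intros eps Heps.
  destruct (proj1 (is_series_C d l) Hl eps Heps) as [N HN].
  exists (S N). intros n Hn. destruct n. lia.
  specialize (HN n ltac:(lia)). rewrite Hs in HN.
  replace (qpoch q (S n) - (l + 1)) with (qpoch q (S n) - 1 - l) by ring. exact HN.
Qed.


Lemma Cmod_sub_tri (s l : C) : (Cmod l <= Cmod s + Cmod (s - l))%R.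
Proof.
  assert (Ht := Cmod_triangle s (l - s)).
  replace (s + (l - s)) with l in Ht by ring.
  replace (l - s) with (- (s - l)) in Ht by ring.
  rewrite Cmod_opp in Ht. lra.
Qed.

Lemma add_sub_C (x y : C) : y = x + @minus C_AbelianGroup y x.
Proof. change (y = x + (y - x)). ring. Qed.

Lemma lim_le (f : nat -> C) l c M0 :
  is_series f l -> (forall M, (M0 <= M)%nat -> Cmod (sum_n f M) <= c)%R -> (Cmod l <= c)%R.
Proof.
  intros Hl HM. destruct (Rle_or_lt (Cmod l) c) as [H|H]; auto. exfalso.
  destruct (proj1 (is_series_C f l) Hl (Cmod l - c)%R ltac:(lra)) as [N HN].
  specialize (HN (max N M0) ltac:(lia)). specialize (HM (max N M0) ltac:(lia)).
  assert (Ht := Cmod_sub_tri (sum_n f (max N M0)) l). lra.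
Qed.

Lemma fin_bound (f : nat -> C) K e :
  (forall k, (k <= K)%nat -> Cmod (f k) <= e)%R -> (Cmod (sum_n f K) <= INR (S K) * e)%R.
Proof.
  induction K; intros H.
  - rewrite sum_O. simpl. specialize (H 0%nat ltac:(lia)). lra.
  - rewrite sum_n_C_S. eapply Rle_trans. apply Cmod_triangle.
    rewrite S_INR. specialize (IHK ltac:(intros; apply H; lia)).
    specialize (H (S K) ltac:(lia)). lra.
Qed.

Lemma fin_eventually (a : nat -> nat -> C) e :
  (forall k, exists N0, forall N, (N0 <= N)%nat -> Cmod (a N k) < e)%R ->
  forall K, exists N0, forall N, (N0 <= N)%nat -> forall k, (k <= K)%nat -> (Cmod (a N k) < e)%R.
Proof.
  intros H K. induction K.
  - destruct (H 0%nat) as [N0 HN]. exists N0. intros N HN0 k Hk.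
    replace k with 0%nat by lia. auto.
  - destruct IHK as [N1 H1]. destruct (H (S K)) as [N2 H2]. exists (max N1 N2).
    intros N HN k Hk. destruct (Nat.eq_dec k (S K)). subst. apply H2; lia.
    apply H1; lia.
Qed.

Lemma tannery (a : nat -> nat -> C) (l : nat -> C) (b : nat -> R) :
  (forall N, is_series (a N) (l N)) -> (forall N k, Cmod (a N k) <= b k)%R -> ex_series b ->
  (forall k eps, 0 < eps -> exists N0, forall N, (N0 <= N)%nat -> Cmod (a N k) < eps)%R ->
  forall eps, (0 < eps)%R -> exists N0, forall N, (N0 <= N)%nat -> (Cmod (l N) <= eps)%R.
Proof.
  intros Hl Hb Hex Hk eps Heps.
  apply (@Cauchy_ex_series R_AbsRing R_CompleteNormedModule) in Hex.
  destruct (Hex (mkposreal (eps / 2) ltac:(lra))) as [K HK]. simpl in HK.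
  set (e := (eps / (2 * INR (S K)))%R).
  assert (HSK : (0 < INR (S K))%R) by (apply lt_0_INR; lia).
  assert (He : (0 < e)%R) by (unfold e; apply Rdiv_lt_0_compat; lra).
  destruct (fin_eventually a e (fun k => Hk k e He) K) as [N0 HN0].
  exists N0. intros N HN. apply (lim_le (a N) (l N) eps (S K)); auto.
  intros M HM.
  assert (Hsplit : sum_n (a N) M = sum_n (a N) K + sum_n_m (a N) (S K) M).
  { assert (E := sum_n_m_sum_n (a N) K M ltac:(lia)).
    etransitivity; [apply (add_sub_C (sum_n (a N) K))|]. f_equal. symmetry. exact E. }
  rewrite Hsplit. eapply Rle_trans. apply Cmod_triangle.
  assert (H1 : (Cmod (sum_n (a N) K) <= INR (S K) * e)%R).
  { apply fin_bound. intros k Hk'. left. apply HN0; auto. }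
  assert (H2 : (Cmod (sum_n_m (a N) (S K) M) <= sum_n_m b (S K) M)%R).
  { eapply Rle_trans. apply (@norm_sum_n_m C_AbsRing C_NormedModule).
    apply sum_n_m_le. intros k. apply Hb. }
  specialize (HK (S K) M ltac:(lia) ltac:(lia)).
  change (norm (sum_n_m b (S K) M)) with (Rabs (sum_n_m b (S K) M)) in HK.
  assert (H3 := Rle_abs (sum_n_m b (S K) M)).
  replace (INR (S K) * e)%R with (eps / 2)%R in H1 by (unfold e; field; lra).
  lra.
Qed.


Lemma back_step (x y x' y' t : C) (s : R) :
  Cmod t = s -> (0 < s < 1)%R ->
  x' = x + t * y -> y' = (1 - t) * y + t * x' ->
  ((1 - s) * (Cmod x + Cmod y) <= (1 + s) * (Cmod x' + Cmod y'))%R.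
Proof.
  intros Ht Hs E1 E2.
  assert (H1 : ((1 - s) * Cmod y <= Cmod y' + s * Cmod x')%R).
  { assert (Ey : (1 - t) * y = y' - t * x') by (rewrite E2; ring).
    assert (H := Cmod_1_minus_ge t). rewrite Ht in H.
    apply Rle_trans with (Cmod (1 - t) * Cmod y)%R.
    apply Rmult_le_compat_r. apply Cmod_ge_0. exact H.
    rewrite <- Cmod_mult, Ey. eapply Rle_trans. apply (Cmod_triangle y' (- (t * x'))).
    rewrite Cmod_opp, Cmod_mult, Ht. lra. }
  assert (H2 : (Cmod x <= Cmod x' + s * Cmod y)%R).
  { assert (Ex : x = x' + - (t * y)) by (rewrite E1; ring).
    rewrite Ex. eapply Rle_trans. apply Cmod_triangle. rewrite Cmod_opp, Cmod_mult, Ht. lra. }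
  assert (Z1 : (0 <= Cmod x)%R) by apply Cmod_ge_0.
  assert (Z2 : (0 <= Cmod y)%R) by apply Cmod_ge_0.
  assert (Z3 : (0 <= Cmod x')%R) by apply Cmod_ge_0.
  assert (Z4 : (0 <= Cmod y')%R) by apply Cmod_ge_0.
  assert (H3 : ((1 + s) * ((1 - s) * Cmod y) <= (1 + s) * (Cmod y' + s * Cmod x'))%R)
    by (apply Rmult_le_compat_l; lra).
  assert (H4 : ((1 - s) * Cmod x <= (1 - s) * (Cmod x' + s * Cmod y))%R)
    by (apply Rmult_le_compat_l; lra).
  assert (H5 : (0 <= s * (1 - s) * Cmod x')%R) by (apply Rmult_le_pos; [apply Rmult_le_pos|]; lra).
  lra.
Qed.

Lemma step_exp (M M' s r : R) :
  (0 < s <= r)%R -> (r < 1)%R -> (0 <= M')%R ->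
  ((1 - s) * M <= (1 + s) * M')%R -> (M <= exp (2 * s / (1 - r)) * M')%R.
Proof.
  intros Hs Hr HM H.
  assert (HM1 : (M <= (1 + 2 * s / (1 - s)) * M')%R).
  { replace (1 + 2 * s / (1 - s))%R with ((1 + s) / (1 - s))%R by (field; lra).
    unfold Rdiv. rewrite Rmult_assoc, (Rmult_comm (/ (1 - s))), <- Rmult_assoc.
    apply Rmult_le_reg_r with (1 - s)%R. lra.
    rewrite Rmult_assoc, Rinv_l, Rmult_1_r by lra. lra. }
  eapply Rle_trans. exact HM1. apply Rmult_le_compat_r. auto.
  eapply Rle_trans; [|apply exp_ineq1_le]. apply Rplus_le_compat_l.
  unfold Rdiv. apply Rmult_le_compat_l. lra. apply Rinv_le_contravar; lra.
Qed.

Lemma back_bound (m : nat -> R) (r : R) :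
  (0 < r < 1)%R -> (forall n, 0 <= m n)%R ->
  (forall n, (1 - r ^ S n) * m n <= (1 + r ^ S n) * m (S n))%R ->
  forall d n, (m n <= exp (2 * (r ^ S n - r ^ S (n + d)) / (1 - r) ^ 2) * m (n + d)%nat)%R.
Proof.
  intros Hr Hm Hs d. induction d; intros n.
  - rewrite Nat.add_0_r. replace (r ^ S n - r ^ S n)%R with 0%R by ring.
    unfold Rdiv. rewrite !Rmult_0_r, Rmult_0_l, exp_0. lra.
  - assert (Hsn : (0 < r ^ S n <= r)%R).
    { split. apply pow_lt; lra. simpl. assert (r ^ n <= 1)%R by (apply pow_le1; lra).
      assert (0 < r ^ n)%R by (apply pow_lt; lra). nra. }
    assert (H1 := step_exp (m n) (m (S n)) (r ^ S n) r Hsn ltac:(lra) (Hm _) (Hs n)).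
    specialize (IHd (S n)). replace (S n + d)%nat with (n + S d)%nat in IHd by lia.
    eapply Rle_trans. exact H1.
    eapply Rle_trans. apply Rmult_le_compat_l. left; apply exp_pos. exact IHd.
    rewrite <- Rmult_assoc, <- exp_plus. apply Rmult_le_compat_r. auto.
    apply exp_mono. right. change (r ^ S (S n))%R with (r * r ^ S n)%R. field. lra.
Qed.

Lemma back_zero (m : nat -> R) (r : R) :
  (0 < r < 1)%R -> (forall n, 0 <= m n)%R ->
  (forall n, (1 - r ^ S n) * m n <= (1 + r ^ S n) * m (S n))%R ->
  (forall eps, 0 < eps -> exists N0, forall N, (N0 <= N)%nat -> m N <= eps)%R ->
  forall n, m n = 0%R.
Proof.
  intros Hr Hm Hs Hlim n.
  set (E := exp (2 / (1 - r) ^ 2)).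
  assert (HE : (0 < E)%R) by apply exp_pos.
  assert (Hb : forall d, (m n <= E * m (n + d)%nat)%R).
  { intros d. eapply Rle_trans. apply (back_bound m r Hr Hm Hs d n). apply Rmult_le_compat_r. auto.
    apply exp_mono. unfold Rdiv. apply Rmult_le_compat_r.
    left. apply Rinv_0_lt_compat, pow_lt; lra.
    assert (r ^ S n <= 1)%R by (apply pow_le1; lra).
    assert (0 <= r ^ S (n + d))%R by (apply pow_le; lra). lra. }
  destruct (Rle_lt_or_eq_dec 0 (m n) (Hm n)) as [Hp|Hp]; auto.
  exfalso. destruct (Hlim (m n / (2 * E))%R) as [N0 HN0].
  apply Rdiv_lt_0_compat; lra.
  specialize (Hb N0). specialize (HN0 (n + N0)%nat ltac:(lia)).
  assert (E * m (n + N0)%nat <= E * (m n / (2 * E)))%R by (apply Rmult_le_compat_l; lra).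
  replace (E * (m n / (2 * E)))%R with (m n / 2)%R in H by (field; lra). lra.
Qed.


Lemma one_minus_pow_nz (q : C) (hr0 : (0 < Cmod q)%R) (hr1 : (Cmod q < 1)%R) m :
  1 - q ^ (S m) <> 0.
Proof.
  intros H. assert (E : q ^ S m = 1) by (apply (f_equal (fun x => 1 - x)) in H;
    replace (1 - (1 - q ^ S m)) with (q ^ S m) in H by ring; rewrite H; ring).
  apply (f_equal Cmod) in E. rewrite Cmod_pow, Cmod_1 in E. simpl in E.
  assert (Cmod q ^ m <= 1)%R by (apply pow_le1; split; lra).
  assert (0 < Cmod q ^ m)%R by (apply pow_lt; lra). nra.
Qed.

Lemma qinv_eq q z m : z = Z.of_nat m -> qpoch_inv q z = / qpoch q m.
Proof. intros ->. apply qpoch_inv_nat. Qed.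

Lemma qinv_neg q z : (z < 0)%Z -> qpoch_inv q z = 0.
Proof. apply qpoch_inv_neg. Qed.

Lemma Cpow_sq_S (q : C) j : q ^ (S j * S j) = q ^ (j * j) * q ^ j * q ^ j * q.
Proof. replace (S j * S j)%nat with (j * j + j + j + 1)%nat by lia.
  rewrite !Cpow_add_r, Cpow_1_r. ring. Qed.

Lemma Cpow_plus_self (q : C) j : q ^ (j * j + j) = q ^ (j * j) * q ^ j.
Proof. apply Cpow_add_r. Qed.

Definition t1 q n k := q ^ (k * k) * / qpoch q k * / qpoch q (n + k).
Definition t2 q n k := q ^ (k * k + k) * / qpoch q k * / qpoch q (n + k + 1).
Definition u1 q n k := q ^ (k * k) * / qpoch q k * qpoch_inv q (Z.of_nat n - Z.of_nat k).
Definition u2 q n k := q ^ (k * k + k) * / qpoch q k * qpoch_inv q (Z.of_nat n - Z.of_nat k).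
Definition G q n k := q ^ (S k * S k) * / qpoch q k * / qpoch q (n + k + 2).
Definition Gs q n k := match k return C with O => 0 | S j => G q n j end.
Definition u2s q n k := match k return C with O => 0 | S j => u2 q n j end.

Lemma t1_rec (q : C) (hr0 : (0 < Cmod q)%R) (hr1 : (Cmod q < 1)%R) n k :
  t1 q (S n) k = t1 q n k + q ^ (S n) * t2 q n k.
Proof.
  unfold t1, t2.
  assert (E1 : qpoch q (S n + k) = qpoch q (n + k) * (1 - q ^ (S n) * q ^ k)).
  { replace (S n + k)%nat with (S (n + k)) by lia. rewrite qpoch_S. f_equal. f_equal.
    replace (S (n + k)) with (S n + k)%nat by lia. apply Cpow_add_r. }
  assert (E2 : qpoch q (n + k + 1) = qpoch q (n + k) * (1 - q ^ (S n) * q ^ k)).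
  { rewrite <- E1. f_equal. lia. }
  rewrite E1, E2, Cpow_add_r.
  assert (N1 := qpoch_nz q hr0 hr1 k). assert (N2 := qpoch_nz q hr0 hr1 (n + k)).
  assert (N3 : 1 - q ^ (S n) * q ^ k <> 0).
  { rewrite <- Cpow_add_r. replace (S n + k)%nat with (S (n + k)) by lia.
    apply one_minus_pow_nz; auto. }
  field. auto.
Qed.

Lemma t2_rec (q : C) (hr0 : (0 < Cmod q)%R) (hr1 : (Cmod q < 1)%R) n k :
  t2 q (S n) k = (1 - q ^ S n) * t2 q n k + q ^ S n * t1 q (S n) k
                 + q ^ S n * G q n k - q ^ S n * Gs q n k.
Proof.
  set (T := q ^ S n).
  destruct k as [|j].
  - unfold t2, t1, G, Gs. simpl (0 * 0)%nat. simpl (0 + 0)%nat. simpl (1 * 1)%nat.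
    rewrite !Nat.add_0_r.
    set (W := qpoch q (n + 1)).
    assert (E1 : qpoch q (S n + 1) = W * (1 - T * q)).
    { replace (S n + 1)%nat with (S (n + 1)) by lia. rewrite qpoch_S. f_equal. f_equal.
      unfold T. replace (S (n + 1)) with (S n + 1)%nat by lia. rewrite Cpow_add_r, Cpow_1_r. auto. }
    assert (E2 : qpoch q (n + 2) = W * (1 - T * q)).
    { rewrite <- E1. f_equal. lia. }
    assert (E3 : qpoch q (S n) = W). { unfold W. f_equal. lia. }
    rewrite E1, E2, E3.
    assert (N2 : W <> 0) by (apply qpoch_nz; auto).
    assert (N3 : 1 - T * q <> 0).
    { unfold T. replace (q ^ S n * q) with (q ^ (S (S n))) by (rewrite Cpow_S, Cpow_S; simpl; ring).
      apply one_minus_pow_nz; auto. }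
    simpl qpoch. simpl Cpow. field. auto.
  - change (Gs q n (S j)) with (G q n j). unfold t2, t1, G.
    set (a := q ^ (j * j)). set (b := q ^ j). set (Qj := qpoch q j).
    set (W := qpoch q (n + j + 2)).
    assert (P1 : q ^ (S j * S j + S j) = a * b * b * b * q * q).
    { rewrite Cpow_add_r, Cpow_sq_S, Cpow_S. fold a b. ring. }
    assert (P2 : q ^ (S (S j) * S (S j)) = a * b * b * b * b * q * q * q * q).
    { rewrite Cpow_sq_S, Cpow_sq_S, Cpow_S. fold a b. ring. }
    assert (P3 : q ^ (S j * S j) = a * b * b * q) by (rewrite Cpow_sq_S; fold a b; ring).
    assert (Q1 : qpoch q (S j) = Qj * (1 - q * b)) by (rewrite qpoch_S, Cpow_S; auto).
    assert (Q2 : qpoch q (S n + S j + 1) = W * (1 - T * b * q * q)).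
    { replace (S n + S j + 1)%nat with (S (n + j + 2)) by lia. rewrite qpoch_S. f_equal. f_equal.
      unfold T, b. replace (S (n + j + 2)) with (S n + j + 1 + 1)%nat by lia.
      rewrite !Cpow_add_r, Cpow_1_r. ring. }
    assert (Q3 : qpoch q (n + S j + 1) = W) by (unfold W; f_equal; lia).
    assert (Q4 : qpoch q (S n + S j) = W) by (unfold W; f_equal; lia).
    assert (Q5 : qpoch q (n + S j + 2) = W * (1 - T * b * q * q)).
    { rewrite <- Q2. f_equal. lia. }
    rewrite P1, P2, P3, Q1, Q2, Q3, Q4, Q5.
    assert (N1 : Qj <> 0) by (apply qpoch_nz; auto).
    assert (N2 : W <> 0) by (apply qpoch_nz; auto).
    assert (N3 : 1 - q * b <> 0).
    { unfold b. rewrite <- Cpow_S. apply one_minus_pow_nz; auto. }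
    assert (N4 : 1 - T * b * q * q <> 0).
    { unfold T, b. replace (q ^ S n * q ^ j * q * q) with (q ^ (S (S n + j + 1))).
      apply one_minus_pow_nz; auto.
      replace (S (S n + j + 1)) with (S n + j + 1 + 1)%nat by lia.
      rewrite !Cpow_add_r, Cpow_1_r. ring. }
    field. repeat split; auto.
Qed.

Lemma u2_rec (q : C) (hr0 : (0 < Cmod q)%R) (hr1 : (Cmod q < 1)%R) n k :
  u2 q (S n) k = u2 q n k + q ^ S n * u1 q (S n) k.
Proof.
  unfold u2, u1.
  destruct (le_lt_dec k n) as [Hk|Hk].
  - destruct (Nat.le_exists_sub k n Hk) as [m [-> _]].
    rewrite (qinv_eq q (Z.of_nat (S (m + k)) - Z.of_nat k) (S m)) by lia.
    rewrite (qinv_eq q (Z.of_nat (m + k) - Z.of_nat k) m) by lia.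
    rewrite qpoch_S, Cpow_add_r.
    replace (q ^ S (m + k)) with (q ^ k * q ^ m * q)
      by (replace (S (m + k)) with (k + m + 1)%nat by lia; rewrite !Cpow_add_r, Cpow_1_r; auto).
    assert (N1 := qpoch_nz q hr0 hr1 k). assert (N2 := qpoch_nz q hr0 hr1 m).
    assert (N3 := one_minus_pow_nz q hr0 hr1 m).
    rewrite Cpow_S in *. field. auto.
  - destruct (Nat.eq_dec k (S n)) as [->|Hk2].
    + rewrite (qinv_eq q (Z.of_nat (S n) - Z.of_nat (S n)) 0) by lia.
      rewrite (qinv_neg q (Z.of_nat n - Z.of_nat (S n))) by lia.
      rewrite Cpow_add_r. ring.
    + rewrite (qinv_neg q (Z.of_nat (S n) - Z.of_nat k)) by lia.
      rewrite (qinv_neg q (Z.of_nat n - Z.of_nat k)) by lia. ring.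
Qed.

Lemma u1_rec (q : C) (hr0 : (0 < Cmod q)%R) (hr1 : (Cmod q < 1)%R) n k :
  (1 - q ^ S n) * u1 q (S n) k = u1 q n k + q ^ S n * u2s q n k.
Proof.
  destruct k as [|j].
  - unfold u1, u2s. simpl (0 * 0)%nat.
    rewrite (qinv_eq q (Z.of_nat (S n) - Z.of_nat 0) (S n)) by lia.
    rewrite (qinv_eq q (Z.of_nat n - Z.of_nat 0) n) by lia.
    rewrite qpoch_S. simpl qpoch. simpl Cpow.
    assert (N2 := qpoch_nz q hr0 hr1 n).
    assert (N3 := one_minus_pow_nz q hr0 hr1 n).
    field. auto.
  - change (u2s q n (S j)) with (u2 q n j). unfold u1, u2.
    destruct (le_lt_dec j n) as [Hk|Hk].
    + destruct (Nat.le_exists_sub j n Hk) as [m [-> _]].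
      assert (N1 := qpoch_nz q hr0 hr1 j).
      assert (N3 := one_minus_pow_nz q hr0 hr1 j).
      destruct m as [|m].
      * simpl (0 + j)%nat.
        rewrite (qinv_eq q (Z.of_nat (S j) - Z.of_nat (S j)) 0) by lia.
        rewrite (qinv_neg q (Z.of_nat j - Z.of_nat (S j))) by lia.
        rewrite (qinv_eq q (Z.of_nat j - Z.of_nat j) 0) by lia.
        rewrite qpoch_S, Cpow_sq_S, Cpow_add_r. simpl qpoch.
        rewrite Cpow_S in *. field. auto.
      * rewrite (qinv_eq q (Z.of_nat (S (S m + j)) - Z.of_nat (S j)) (S m)) by lia.
        rewrite (qinv_eq q (Z.of_nat (S m + j) - Z.of_nat (S j)) m) by lia.
        rewrite (qinv_eq q (Z.of_nat (S m + j) - Z.of_nat j) (S m)) by lia.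
        replace (q ^ S (S m + j)) with (q ^ j * q ^ m * q * q)
          by (replace (S (S m + j)) with (j + m + 1 + 1)%nat by lia; rewrite !Cpow_add_r, Cpow_1_r; ring).
        assert (N2 := qpoch_nz q hr0 hr1 m).
        assert (N4 := one_minus_pow_nz q hr0 hr1 m).
        rewrite !qpoch_S, Cpow_sq_S, Cpow_add_r.
        rewrite (Cpow_S q j) in *. rewrite (Cpow_S q m) in *. field. auto.
    + rewrite (qinv_neg q (Z.of_nat (S n) - Z.of_nat (S j))) by lia.
      rewrite (qinv_neg q (Z.of_nat n - Z.of_nat (S j))) by lia.
      rewrite (qinv_neg q (Z.of_nat n - Z.of_nat j)) by lia. ring.
Qed.


Lemma pow_le_k (q : C) (hr0 : (0 < Cmod q)%R) (hr1 : (Cmod q < 1)%R) k e :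
  (k <= e)%nat -> (Cmod (q ^ e) <= Cmod q ^ k)%R.
Proof.
  intros H. rewrite Cmod_pow. replace e with (k + (e - k))%nat by lia.
  rewrite pow_add. assert (Cmod q ^ (e - k) <= 1)%R by (apply pow_le1; lra).
  assert (0 <= Cmod q ^ k)%R by (apply pow_le; lra).
  replace (k + (e - k) - k)%nat with (e - k)%nat by lia. nra.
Qed.

Lemma term_bound (q : C) (hr0 : (0 < Cmod q)%R) (hr1 : (Cmod q < 1)%R) k e x :
  (k <= e)%nat -> (Cmod x <= Vb q)%R ->
  (Cmod (q ^ e * / qpoch q k * x) <= (Vb q * Vb q) * Cmod q ^ k)%R.
Proof.
  intros H Hx. rewrite !Cmod_mult.
  assert (H1 := pow_le_k q hr0 hr1 k e H).
  assert (H2 := qpoch_inv_bound q hr0 hr1 k).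
  assert (0 <= Cmod (q ^ e))%R by apply Cmod_ge_0.
  assert (0 <= Cmod (/ qpoch q k))%R by apply Cmod_ge_0.
  assert (0 <= Cmod x)%R by apply Cmod_ge_0.
  assert (0 <= Cmod q ^ k)%R by (apply pow_le; lra).
  assert (HV := Vb_pos q).
  assert (Cmod (q ^ e) * Cmod (/ qpoch q k) <= Cmod q ^ k * Vb q)%R
    by (apply Rmult_le_compat; auto).
  assert (Cmod (q ^ e) * Cmod (/ qpoch q k) * Cmod x <= (Cmod q ^ k * Vb q) * Vb q)%R
    by (apply Rmult_le_compat; auto; apply Rmult_le_pos; auto).
  nra.
Qed.

Lemma ex_t1 (q : C) (hr0 : (0 < Cmod q)%R) (hr1 : (Cmod q < 1)%R) n : ex_series (t1 q n).
Proof. apply (ex_series_C_bound _ (Vb q * Vb q) (Cmod q)). lra.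
  intros k. unfold t1. apply term_bound; auto. nia. apply qpoch_inv_bound; auto. Qed.
Lemma ex_t2 (q : C) (hr0 : (0 < Cmod q)%R) (hr1 : (Cmod q < 1)%R) n : ex_series (t2 q n).
Proof. apply (ex_series_C_bound _ (Vb q * Vb q) (Cmod q)). lra.
  intros k. unfold t2. apply term_bound; auto. nia. apply qpoch_inv_bound; auto. Qed.
Lemma ex_u1 (q : C) (hr0 : (0 < Cmod q)%R) (hr1 : (Cmod q < 1)%R) n : ex_series (u1 q n).
Proof. apply (ex_series_C_bound _ (Vb q * Vb q) (Cmod q)). lra.
  intros k. unfold u1. apply term_bound; auto. nia. apply qpoch_inv_bound_Z; auto. Qed.
Lemma ex_u2 (q : C) (hr0 : (0 < Cmod q)%R) (hr1 : (Cmod q < 1)%R) n : ex_series (u2 q n).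
Proof. apply (ex_series_C_bound _ (Vb q * Vb q) (Cmod q)). lra.
  intros k. unfold u2. apply term_bound; auto. nia. apply qpoch_inv_bound_Z; auto. Qed.
Lemma ex_G (q : C) (hr0 : (0 < Cmod q)%R) (hr1 : (Cmod q < 1)%R) n : ex_series (G q n).
Proof. apply (ex_series_C_bound _ (Vb q * Vb q) (Cmod q)). lra.
  intros k. unfold G. apply term_bound; auto. nia. apply qpoch_inv_bound; auto. Qed.

Lemma is_series_zero : is_series (fun _ : nat => (RtoC 0)) (RtoC 0).
Proof.
  apply is_series_C. intros eps Heps. exists 0%nat. intros n _.
  assert (E : sum_n (fun _ : nat => (RtoC 0)) n = RtoC 0).
  { induction n. rewrite sum_O. reflexivity. rewrite sum_n_C_S, IHn. Ceq. ring. }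
  rewrite E. replace (RtoC 0 - 0) with (RtoC 0) by ring. rewrite Cmod_0. auto.
Qed.

Lemma shift_series (f : nat -> C) l :
  is_series f l -> is_series (fun k => match k return C with O => 0 | S j => f j end) l.
Proof.
  intros H. apply is_series_decr_1. simpl.
  match goal with |- is_series _ ?x => replace x with l end. exact H.
  assert (Hz : forall z : C, z = z + - 0) by (intros; ring). apply Hz.
Qed.

Lemma is_series_C_scal (a : nat -> C) la x :
  is_series a la -> is_series (fun k => x * a k) (x * la).
Proof. intros H. exact (is_series_scal x _ _ H). Qed.


Lemma termlim (q : C) (hr0 : (0 < Cmod q)%R) (hr1 : (Cmod q < 1)%R) (P : C)
  (HP : qpoch_inf_is q P) (c : C) k j :
  (Cmod c <= Vb q)%R ->
  forall eps, (0 < eps)%R -> exists N0, forall N, (N0 <= N)%nat ->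
    (Cmod (c * (qpoch q N * qpoch_inv q (Z.of_nat N - Z.of_nat k) - P * / qpoch q (N + j))) < eps)%R.
Proof.
  intros Hc eps Heps.
  set (V := Vb q). assert (HV : (0 < V)%R) by apply Vb_pos.
  set (e := (eps / (4 * V * V))%R).
  assert (He : (0 < e)%R) by (unfold e; apply Rdiv_lt_0_compat; nra).
  destruct (proj1 (lim_C _ _) HP e He) as [N1 HN1].
  exists (N1 + k)%nat. intros N HN.
  rewrite (qinv_eq q (Z.of_nat N - Z.of_nat k) (N - k)) by lia.
  set (a := qpoch q N). set (b := qpoch q (N - k)). set (d := qpoch q (N + j)).
  assert (Nb : b <> 0) by (apply qpoch_nz; auto).
  assert (Nd : d <> 0) by (apply qpoch_nz; auto).
  assert (Ia : (Cmod (a - P) < e)%R) by (apply HN1; lia).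
  assert (Ib : (Cmod (b - P) < e)%R) by (apply HN1; lia).
  assert (Id : (Cmod (d - P) < e)%R) by (apply HN1; lia).
  assert (Vb' : (Cmod (/ b) <= V)%R) by (apply qpoch_inv_bound; auto).
  assert (Vd' : (Cmod (/ d) <= V)%R) by (apply qpoch_inv_bound; auto).
  assert (E : a * / b - P * / d = (a - P) * / b + - ((b - P) * / b) + (d - P) * / d)
    by (field; auto).
  rewrite E.
  assert (HD : (Cmod ((a - P) * / b + - ((b - P) * / b) + (d - P) * / d) <= 3 * e * V)%R).
  { eapply Rle_trans. apply Cmod_triangle. eapply Rle_trans. apply Rplus_le_compat_r. apply Cmod_triangle.
    rewrite Cmod_opp, !Cmod_mult.
    assert (Cmod (a - P) * Cmod (/ b) <= e * V)%R by (apply Rmult_le_compat; try apply Cmod_ge_0; lra).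
    assert (Cmod (b - P) * Cmod (/ b) <= e * V)%R by (apply Rmult_le_compat; try apply Cmod_ge_0; lra).
    assert (Cmod (d - P) * Cmod (/ d) <= e * V)%R by (apply Rmult_le_compat; try apply Cmod_ge_0; lra).
    lra. }
  rewrite Cmod_mult.
  assert (Cmod c * Cmod ((a - P) * / b + - ((b - P) * / b) + (d - P) * / d) <= V * (3 * e * V))%R
    by (apply Rmult_le_compat; try apply Cmod_ge_0; auto).
  assert (V * (3 * e * V) = 3 / 4 * eps)%R by (unfold e; field; lra).
  lra.
Qed.

Lemma w_bound (q : C) (hr0 : (0 < Cmod q)%R) (hr1 : (Cmod q < 1)%R) (P : C) k e N z m :
  (k <= e)%nat ->
  (Cmod (q ^ e * / qpoch q k * (qpoch q N * qpoch_inv q z - P * / qpoch q m))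
    <= Cmod q ^ k * (Vb q * (Ub q * Vb q + Cmod P * Vb q)))%R.
Proof.
  intros H. rewrite Cmod_mult.
  assert (H1 : (Cmod (q ^ e * / qpoch q k) <= Vb q * Cmod q ^ k)%R).
  { rewrite Cmod_mult. rewrite (Rmult_comm (Vb q)). apply Rmult_le_compat; try apply Cmod_ge_0.
    apply pow_le_k; auto. apply qpoch_inv_bound; auto. }
  assert (H2 : (Cmod (qpoch q N * qpoch_inv q z - P * / qpoch q m) <= Ub q * Vb q + Cmod P * Vb q)%R).
  { replace (qpoch q N * qpoch_inv q z - P * / qpoch q m) with
      (qpoch q N * qpoch_inv q z + - (P * / qpoch q m)) by ring.
    eapply Rle_trans. apply Cmod_triangle. rewrite Cmod_opp, !Cmod_mult.
    apply Rplus_le_compat. apply Rmult_le_compat; try apply Cmod_ge_0.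
    apply qpoch_ub; auto. apply qpoch_inv_bound_Z; auto.
    apply Rmult_le_compat_l. apply Cmod_ge_0. apply qpoch_inv_bound; auto. }
  replace (Cmod q ^ k * (Vb q * (Ub q * Vb q + Cmod P * Vb q)))%R with
    ((Vb q * Cmod q ^ k) * (Ub q * Vb q + Cmod P * Vb q))%R by ring.
  apply Rmult_le_compat; try apply Cmod_ge_0; auto.
Qed.


Theorem mainTheorem15 (q : C) (hq0 : (0 < Cmod q)%R) (hq1 : (Cmod q < 1)%R) (n : nat) :
  exists P L1 R1 L2 R2 : C,
    qpoch_inf_is q P /\
    is_series (fun k : nat =>
      q ^ (k * k) * / qpoch q k * qpoch_inv q (Z.of_nat n - Z.of_nat k)%Z) L1 /\
    is_series (fun k : nat =>
      q ^ (k * k) * / qpoch q k * qpoch_inv q (Z.of_nat n + Z.of_nat k)%Z) R1 /\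
    is_series (fun k : nat =>
      q ^ (k * k + k) * / qpoch q k * qpoch_inv q (Z.of_nat n - Z.of_nat k)%Z) L2 /\
    is_series (fun k : nat =>
      q ^ (k * k + k) * / qpoch q k * qpoch_inv q (Z.of_nat n + Z.of_nat k + 1)%Z) R2 /\
    / P * L1 = / qpoch q n * R1 /\
    / P * L2 = / qpoch q n * R2.
Proof.
  destruct (qpoch_conv q hq0 hq1) as [P HP].
  set (A1 := fun n => CS (t1 q n)). set (A2 := fun n => CS (t2 q n)).
  set (B1 := fun n => CS (u1 q n)). set (B2 := fun n => CS (u2 q n)).
  set (g := fun n => CS (G q n)).
  assert (HA1 : forall n, is_series (t1 q n) (A1 n)) by (intros; apply CS_correct, ex_t1; auto).
  assert (HA2 : forall n, is_series (t2 q n) (A2 n)) by (intros; apply CS_correct, ex_t2; auto).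
  assert (HB1 : forall n, is_series (u1 q n) (B1 n)) by (intros; apply CS_correct, ex_u1; auto).
  assert (HB2 : forall n, is_series (u2 q n) (B2 n)) by (intros; apply CS_correct, ex_u2; auto).
  assert (HG : forall n, is_series (G q n) (g n)) by (intros; apply CS_correct, ex_G; auto).
  assert (HGs : forall n, is_series (Gs q n) (g n)) by (intros m; exact (shift_series _ _ (HG m))).
  assert (HB2s : forall n, is_series (u2s q n) (B2 n)) by (intros m; exact (shift_series _ _ (HB2 m))).
  assert (RA : forall n, A1 (S n) = A1 n + q ^ S n * A2 n).
  { intros m. replace (A1 m + q ^ S m * A2 m) with (1 * A1 m + q ^ S m * A2 m) by ring.
    apply (is_series_C_uniq (t1 q (S m))). apply HA1.
    apply (is_series_C_ext (fun k => 1 * t1 q m k + q ^ S m * t2 q m k)).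
    intros k. rewrite (t1_rec q hq0 hq1 m k). ring.
    apply is_series_C_lin; auto. }
  assert (RB : forall n, A2 (S n) = (1 - q ^ S n) * A2 n + q ^ S n * A1 (S n)).
  { intros m. set (T := q ^ S m).
    assert (H1 := is_series_C_lin _ _ _ _ (1 - T) T (HA2 m) (HA1 (S m))).
    assert (H2 := is_series_C_lin _ _ _ _ T (- T) (HG m) (HGs m)).
    assert (H3 := is_series_C_lin _ _ _ _ 1 1 H1 H2).
    transitivity (1 * ((1 - T) * A2 m + T * A1 (S m)) + 1 * (T * g m + - T * g m)).
    2: ring.
    apply (is_series_C_uniq (t2 q (S m))). apply HA2.
    eapply is_series_C_ext; [|exact H3].
    intros k. simpl. rewrite (t2_rec q hq0 hq1 m k). fold T. ring. }
  assert (RC : forall n, (1 - q ^ S n) * B1 (S n) = B1 n + q ^ S n * B2 n).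
  { intros m. set (T := q ^ S m).
    replace (B1 m + T * B2 m) with (1 * B1 m + T * B2 m) by ring.
    apply (is_series_C_uniq (fun k => (1 - T) * u1 q (S m) k)).
    apply is_series_C_scal; auto.
    apply (is_series_C_ext (fun k => 1 * u1 q m k + T * u2s q m k)).
    intros k. unfold T. rewrite (u1_rec q hq0 hq1 m k). ring.
    apply is_series_C_lin; auto. }
  assert (RD : forall n, B2 (S n) = B2 n + q ^ S n * B1 (S n)).
  { intros m. replace (B2 m + q ^ S m * B1 (S m)) with (1 * B2 m + q ^ S m * B1 (S m)) by ring.
    apply (is_series_C_uniq (u2 q (S m))). apply HB2.
    apply (is_series_C_ext (fun k => 1 * u2 q m k + q ^ S m * u1 q (S m) k)).
    intros k. rewrite (u2_rec q hq0 hq1 m k). ring.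
    apply is_series_C_lin; auto. }
  set (X := fun n => qpoch q n * B1 n - P * A1 n).
  set (Y := fun n => qpoch q n * B2 n - P * A2 n).
  assert (RX : forall n, X (S n) = X n + q ^ S n * Y n).
  { intros m. unfold X, Y. rewrite qpoch_S, RA.
    replace (qpoch q m * (1 - q ^ S m) * B1 (S m)) with (qpoch q m * ((1 - q ^ S m) * B1 (S m))) by ring.
    rewrite RC. ring. }
  assert (RY : forall n, Y (S n) = (1 - q ^ S n) * Y n + q ^ S n * X (S n)).
  { intros m. unfold X, Y. rewrite qpoch_S, RD, RB. ring. }
  set (mm := fun n => (Cmod (X n) + Cmod (Y n))%R).
  assert (Hmm0 : forall n, (0 <= mm n)%R).
  { intros m. unfold mm. assert (H1 := Cmod_ge_0 (X m)). assert (H2 := Cmod_ge_0 (Y m)). lra. }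
  assert (Hstep : forall n, ((1 - Cmod q ^ S n) * mm n <= (1 + Cmod q ^ S n) * mm (S n))%R).
  { intros m. unfold mm. apply (back_step _ _ _ _ (q ^ S m)).
    apply Cmod_pow. split. apply pow_lt; lra.
    simpl. assert (Cmod q ^ m <= 1)%R by (apply pow_le1; lra).
    assert (0 < Cmod q ^ m)%R by (apply pow_lt; lra). nra.
    apply RX. apply RY. }
  set (K0 := (Vb q * (Ub q * Vb q + Cmod P * Vb q))%R).
  assert (Hgeo : ex_series (fun k => (Cmod q ^ k * K0)%R)).
  { apply ex_series_scal_r. apply ex_series_geom. rewrite Rabs_right; lra. }
  assert (LX : forall eps, (0 < eps)%R -> exists N0, forall N, (N0 <= N)%nat -> (Cmod (X N) <= eps)%R).
  { intros eps0 Heps0.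
    enough (HT : forall eps, (0 < eps)%R -> exists N0, forall N, (N0 <= N)%nat ->
       (Cmod (qpoch q N * B1 N + - P * A1 N) <= eps)%R).
    { destruct (HT eps0 Heps0) as [N0 HN0]. exists N0. intros N HN.
      replace (X N) with (qpoch q N * B1 N + - P * A1 N) by (unfold X; ring). auto. }
    apply (tannery (fun N k => qpoch q N * u1 q N k + - P * t1 q N k)
      (fun N => qpoch q N * B1 N + - P * A1 N) (fun k => Cmod q ^ k * K0)%R).
    - intros N. apply is_series_C_lin; auto.
    - intros N k.
      replace (qpoch q N * u1 q N k + - P * t1 q N k) with
        (q ^ (k * k) * / qpoch q k * (qpoch q N * qpoch_inv q (Z.of_nat N - Z.of_nat k) - P * / qpoch q (N + k)))
        by (unfold u1, t1; ring).
      apply w_bound; auto. nia.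
    - exact Hgeo.
    - intros k eps Heps.
      destruct (termlim q hq0 hq1 P HP (q ^ (k * k) * / qpoch q k) k k) with (eps := eps) as [N0 HN0]; auto.
      rewrite Cmod_mult. rewrite <- (Rmult_1_l (Vb q)). apply Rmult_le_compat; try apply Cmod_ge_0.
      rewrite Cmod_pow. apply pow_le1; lra. apply qpoch_inv_bound; auto.
      exists N0. intros N HN.
      replace (qpoch q N * u1 q N k + - P * t1 q N k) with
        (q ^ (k * k) * / qpoch q k * (qpoch q N * qpoch_inv q (Z.of_nat N - Z.of_nat k) - P * / qpoch q (N + k)))
        by (unfold u1, t1; ring).
      apply HN0; auto.
  }
  assert (LY : forall eps, (0 < eps)%R -> exists N0, forall N, (N0 <= N)%nat -> (Cmod (Y N) <= eps)%R).
  { intros eps0 Heps0.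
    enough (HT : forall eps, (0 < eps)%R -> exists N0, forall N, (N0 <= N)%nat ->
       (Cmod (qpoch q N * B2 N + - P * A2 N) <= eps)%R).
    { destruct (HT eps0 Heps0) as [N0 HN0]. exists N0. intros N HN.
      replace (Y N) with (qpoch q N * B2 N + - P * A2 N) by (unfold Y; ring). auto. }
    apply (tannery (fun N k => qpoch q N * u2 q N k + - P * t2 q N k)
      (fun N => qpoch q N * B2 N + - P * A2 N) (fun k => Cmod q ^ k * K0)%R).
    - intros N. apply is_series_C_lin; auto.
    - intros N k.
      replace (qpoch q N * u2 q N k + - P * t2 q N k) with
        (q ^ (k * k + k) * / qpoch q k * (qpoch q N * qpoch_inv q (Z.of_nat N - Z.of_nat k) - P * / qpoch q (N + k + 1)))
        by (unfold u2, t2; ring).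
      apply w_bound; auto. nia.
    - exact Hgeo.
    - intros k eps Heps.
      destruct (termlim q hq0 hq1 P HP (q ^ (k * k + k) * / qpoch q k) k (k + 1)) with (eps := eps) as [N0 HN0]; auto.
      rewrite Cmod_mult. rewrite <- (Rmult_1_l (Vb q)). apply Rmult_le_compat; try apply Cmod_ge_0.
      rewrite Cmod_pow. apply pow_le1; lra. apply qpoch_inv_bound; auto.
      exists N0. intros N HN.
      replace (qpoch q N * u2 q N k + - P * t2 q N k) with
        (q ^ (k * k + k) * / qpoch q k * (qpoch q N * qpoch_inv q (Z.of_nat N - Z.of_nat k) - P * / qpoch q (N + (k + 1))))
        by (unfold u2, t2; rewrite Nat.add_assoc; ring).
      apply HN0; auto.
  }
  assert (Lm : forall eps, (0 < eps)%R -> exists N0, forall N, (N0 <= N)%nat -> (mm N <= eps)%R).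
  { intros eps Heps. destruct (LX (eps / 2)%R ltac:(lra)) as [N1 H1].
    destruct (LY (eps / 2)%R ltac:(lra)) as [N2 H2]. exists (max N1 N2). intros N HN.
    unfold mm. specialize (H1 N ltac:(lia)). specialize (H2 N ltac:(lia)). lra. }
  assert (Hz : forall n, mm n = 0%R).
  { apply (back_zero mm (Cmod q)); auto. }
  assert (HX : forall n, X n = 0).
  { intros m. apply Cmod_eq_0. specialize (Hz m). unfold mm in Hz.
    assert (H1 := Cmod_ge_0 (X m)). assert (H2 := Cmod_ge_0 (Y m)). lra. }
  assert (HY : forall n, Y n = 0).
  { intros m. apply Cmod_eq_0. specialize (Hz m). unfold mm in Hz.
    assert (H1 := Cmod_ge_0 (X m)). assert (H2 := Cmod_ge_0 (Y m)). lra. }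
  assert (B10 : B1 0%nat = 1).
  { apply (is_series_C_uniq (u1 q 0)). apply HB1.
    assert (E0 : u1 q 0 0 = 1).
    { unfold u1. rewrite (qinv_eq q (Z.of_nat 0 - Z.of_nat 0) 0) by lia. simpl. field. }
    assert (Ez : forall k, u1 q 0 (S k) = 0).
    { intros k. unfold u1. rewrite (qinv_neg q (Z.of_nat 0 - Z.of_nat (S k))) by lia. ring. }
    apply is_series_decr_1.
    match goal with |- is_series _ ?x => replace x with (RtoC 0) end.
    apply (is_series_C_ext (fun _ => RtoC 0)). intros k. symmetry. apply Ez. apply is_series_zero.
    rewrite E0. assert (Hw : forall z : C, RtoC 0 = z + - z) by (intros; ring). apply Hw. }
  assert (HPnz : P <> 0).
  { intros HP0. specialize (HX 0%nat). unfold X in HX. rewrite B10, HP0 in HX. simpl in HX.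
    apply (f_equal Cmod) in HX. replace (1 * 1 - 0 * A1 0%nat) with (RtoC 1) in HX by ring.
    rewrite Cmod_1, Cmod_0 in HX. lra. }
  assert (Nn := qpoch_nz q hq0 hq1 n).
  exists P, (B1 n), (A1 n), (B2 n), (A2 n).
  split; [exact HP|]. split; [exact (HB1 n)|]. split.
  { apply (is_series_C_ext (t1 q n)); [|apply HA1]. intros k. unfold t1.
    rewrite (qinv_eq q (Z.of_nat n + Z.of_nat k) (n + k)) by lia. reflexivity. }
  split; [exact (HB2 n)|]. split.
  { apply (is_series_C_ext (t2 q n)); [|apply HA2]. intros k. unfold t2.
    rewrite (qinv_eq q (Z.of_nat n + Z.of_nat k + 1) (n + k + 1)) by lia. reflexivity. }
  split.
  - assert (E : qpoch q n * B1 n = P * A1 n).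
    { assert (H := HX n). unfold X in H. apply (f_equal (fun z => z + P * A1 n)) in H.
      replace (qpoch q n * B1 n - P * A1 n + P * A1 n) with (qpoch q n * B1 n) in H by ring.
      rewrite H. ring. }
    transitivity (/ P * / qpoch q n * (qpoch q n * B1 n)). field. auto.
    rewrite E. field. auto.
  - assert (E : qpoch q n * B2 n = P * A2 n).
    { assert (H := HY n). unfold Y in H. apply (f_equal (fun z => z + P * A2 n)) in H.
      replace (qpoch q n * B2 n - P * A2 n + P * A2 n) with (qpoch q n * B2 n) in H by ring.
      rewrite H. ring. }
    transitivity (/ P * / qpoch q n * (qpoch q n * B2 n)). field. auto.
    rewrite E. field. auto.
Qed.
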